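(* Let $\mathtt b\ge2$ and let $(\mathtt T_u,r(u))$, $u\in S$, be a finite family of finite rooted graph trees; write $|x|$ for the graph distance from $r(u)$ to $x\in\mathtt T_u$ and, for $1\le i\le|x|$, $x_i$ for the ancestor of $x$ at height $i$. Let $V^u_x$, $x\in\mathtt T_u$, $u\in S$, be independent uniform random variables on $\{1,\dots,\mathtt b\}$, set $Z^u_x=(V^u_{x_1},\dots,V^u_{x_{|x|}})\in\mathbb W_{\mathtt b}$ (with $Z^u_{r(u)}=\varnothing$) and $\mathtt R_u=\{Z^u_x;x\in\mathtt T_u\}$. For $c\in\mathbb N^*$ let $M_c=\sum_{u\in S}\#\{x\in\mathtt T_u:|x|\le c\}$. Let $w_u\in\mathbb W_{\mathtt b}$, $u\in S$ be deterministic. Then there exists an event $A_c$ with $\mathbf P(A_c)\le\mathtt b^{-c}M_c^2$ such that on the complement of $A_c$, $$0\le\sum_{u\in S}\#\mathtt R_u-\#\Big(\bigcup_{u\in S}w_u\ast\mathtt R_u\Big)\le M_c.$$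
   Context: $\mathbb W_{\mathtt b}$ is the set of finite words over $\{1,\dots,\mathtt b\}$; $w\ast v$ denotes concatenation of words and $w\ast\mathtt R=\{w\ast v;v\in\mathtt R\}$. *)

(* Defs.v *)
From HB Require Import structures.
From mathcomp Require Import all_boot all_order all_algebra.
Set Implicit Arguments. Unset Strict Implicit. Unset Printing Implicit Defensive.
Import Order.TTheory GRing.Theory Num.Theory.

(* A finite rooted tree in Ulam-Harris form: a duplicate-free list of
   vertices (words over nat), containing the root [::], closed under
   taking prefixes. |x| = size x, ancestor at height i = take i x. *)
Definition is_rooted_tree (T : seq (seq nat)) : Prop :=
  [/\ uniq T, [::] \in T & forall x, x \in T -> forall k, take k x \in T].

Definition vtx (S : finType) (T : S -> seq (seq nat)) : finType :=
  {u : S & seq_sub (T u)}.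

(* sample space: the values V^u_x - 1 in 'I_b of all vertices (uniform
   product measure = normalized counting measure) *)
Definition Omega (b : nat) (S : finType) (T : S -> seq (seq nat)) : finType :=
  {ffun vtx T -> 'I_b}.

Definition prob (b : nat) (S : finType) (T : S -> seq (seq nat))
  (A : {set Omega b T}) : rat := (#|A|%:R / #|Omega b T|%:R)%R.

(* V^u_y in {1,..,b} (0 if y is not a vertex of T u, never used) *)
Definition Vlet (b : nat) (S : finType) (T : S -> seq (seq nat))
  (om : Omega b T) (u : S) (y : seq nat) : nat :=
  oapp (fun v : seq_sub (T u) => (om (Tagged (fun u => seq_sub (T u)) v)).+1)
       0 (insub y).

Definition Zw (b : nat) (S : finType) (T : S -> seq (seq nat))
  (om : Omega b T) (u : S) (x : seq nat) : seq nat :=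
  [seq Vlet om u (take i x) | i <- iota 1 (size x)].

Definition Rset (b : nat) (S : finType) (T : S -> seq (seq nat))
  (om : Omega b T) (u : S) : seq (seq nat) :=
  undup [seq Zw om u x | x <- T u].

Definition Union (b : nat) (S : finType) (T : S -> seq (seq nat))
  (w : S -> seq nat) (om : Omega b T) : seq (seq nat) :=
  undup (flatten [seq [seq w u ++ z | z <- Rset om u] | u <- enum S]).

Definition Mc (S : finType) (T : S -> seq (seq nat)) (c : nat) : nat :=
  \sum_(u : S) count (fun x : seq nat => size x <= c) (T u).

(* Main.v *)
Require Import Defs.
From HB Require Import structures.
From mathcomp Require Import all_boot all_order all_algebra.
From mathcomp Require Import zify.
Import Order.TTheory GRing.Theory Num.Theory.
Set Implicit Arguments. Unset Strict Implicit. Unset Printing Implicit Defensive.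

Lemma catlI (X : eqType) (w a b : seq X) : w ++ a = w ++ b -> a = b.
Proof. by elim: w => //= x w IH [] /IH. Qed.

Lemma take_cat_take (X : Type) m (s t : seq X) :
  take m (s ++ t) = take m (s ++ take (m - size s) t).
Proof. by rewrite !take_cat; case: ltnP => // _; rewrite take_takel. Qed.

Lemma count_fix (I : finType) (b : nat) (K : {set I})
  (E : {set {ffun I -> 'I_b}}) :
  (forall f g, f \in E -> g \in E -> (forall i, i \notin K -> f i = g i) -> f = g) ->
  #|E| * b ^ #|K| <= b ^ #|I|.
Proof.
move=> Hfix.
pose F (ft : {ffun I -> 'I_b} * {ffun {x : I | x \in K} -> 'I_b}) :=
  [ffun i => if insub i is Some k then ft.2 k else ft.1 i].
have -> : #|E| * b ^ #|K| = #|setX E [set: {ffun {x : I | x \in K} -> 'I_b}]|.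
  by rewrite cardsX cardsT card_ffun card_ord card_sig; congr (_ * b ^ _);
     apply: eq_card => x; rewrite !inE.
rewrite -(card_in_imset (f := F)); last first.
  move=> [f1 t1] [f2 t2]; rewrite !inE /= !andbT => H1 H2 /ffunP HF.
  have Ht : t1 = t2.
    apply/ffunP => k; move: (HF (val k)); rewrite !ffunE valK //.
  subst t2; congr (_, _); apply: Hfix => // i Hi.
  by move: (HF i); rewrite !ffunE insubN.
apply: leq_trans (max_card _) _; by rewrite card_ffun card_ord.
Qed.

Lemma Vlet_val b (S : finType) (T : S -> seq (seq nat)) (om : Omega b T) u
  (s : seq_sub (T u)) :
  Vlet om u (ssval s) = (om (Tagged (fun u => seq_sub (T u)) s)).+1.
Proof. by rewrite /Vlet (valK s). Qed.

Lemma Zw_ext b (S : finType) (T : S -> seq (seq nat)) (om1 om2 : Omega b T) u x :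
  (forall s : seq_sub (T u), om1 (Tagged (fun u => seq_sub (T u)) s)
                           = om2 (Tagged (fun u => seq_sub (T u)) s)) ->
  Zw om1 u x = Zw om2 u x.
Proof.
move=> H; apply: eq_map => i; rewrite /Vlet.
by case: (insub (take i x)) => //= s; rewrite H.
Qed.

Lemma size_Zw b (S : finType) (T : S -> seq (seq nat)) (om : Omega b T) u x :
  size (Zw om u x) = size x.
Proof. by rewrite size_map size_iota. Qed.

Lemma take_Zw b (S : finType) (T : S -> seq (seq nat)) (om : Omega b T) u x k :
  take k (Zw om u x) = Zw om u (take k x).
Proof.
rewrite /Zw -map_take take_iota size_take_min.
apply/eq_in_map => i; rewrite mem_iota => /andP [_ Hi].
rewrite take_takel //; lia.
Qed.

Lemma nth_Zw b (S : finType) (T : S -> seq (seq nat)) (om : Omega b T) u x i :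
  0 < i <= size x -> nth 0 (Zw om u x) i.-1 = Vlet om u (take i x).
Proof.
move=> /andP [Hi0 Hi]; rewrite (nth_map 0); last by rewrite size_iota; lia.
rewrite nth_iota; last by lia.
by congr (Vlet _ _ (take _ _)); lia.
Qed.

Definition condpq (S : finType) (T : S -> seq (seq nat)) c (p q : vtx T) :=
  [&& tag p != tag q, size (ssval (tagged p)) == c & size (ssval (tagged q)) <= c].

Definition Ebad b (S : finType) (T : S -> seq (seq nat)) (w : S -> seq nat) c
  (om : Omega b T) (p q : vtx T) :=
  condpq c p q &&
  (w (tag p) ++ Zw om (tag p) (ssval (tagged p)) ==
   take (size (w (tag p)) + c) (w (tag q) ++ Zw om (tag q) (ssval (tagged q)))).

Lemma card_Ebad b (S : finType) (T : S -> seq (seq nat)) (w : S -> seq nat) c p q :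
  (forall u, is_rooted_tree (T u)) -> 0 < b ->
  #|[set om : Omega b T | Ebad w c om p q]| * b ^ c <= condpq c p q * #|Omega b T|.
Proof.
move=> Htree Hb.
case Hc: (condpq c p q); last first.
  rewrite (_ : [set om | _] = set0) ?cards0 //.
  by apply/setP => om; rewrite !inE /Ebad Hc.
rewrite mul1n.
move: Hc; case: p => u xs; case: q => v ys; rewrite /condpq /= => /and3P [Huv /eqP Hx Hy].
set x := ssval xs; set y := ssval ys.
have {}Hx : size x = c by [].
have Hxu : x \in T u by apply: ssvalP.
set K := [set k : vtx T | (tag k == u) &&
            (ssval (tagged k) \in [seq take i x | i <- iota 1 c])].
have HK : c <= #|K|.
  have Hu : uniq [seq take i x | i <- iota 1 c].
    rewrite map_inj_in_uniq ?iota_uniq // => i j; rewrite !mem_iota => Hi Hj Heq.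
    have := congr1 size Heq; rewrite !size_takel ?Hx //; lia.
  have := uniq_leq_size Hu.
  rewrite size_map size_iota cardE -(size_map (fun k : vtx T => ssval (tagged k))).
  apply=> z /mapP [i Hi ->].
  have Hin : take i x \in T u by case: (Htree u) => _ _ /(_ x Hxu i).
  apply/mapP; exists (Tagged (fun u => seq_sub (T u)) (@SeqSub _ (T u) _ Hin)) => //.
  by rewrite mem_enum inE /= eqxx /=; apply: map_f.
apply: leq_trans (leq_mul (leqnn _) (leq_pexp2l Hb HK)) _.
rewrite /Omega card_ffun card_ord.
apply: count_fix => om1 om2; rewrite !inE /Ebad /condpq /= Huv Hx eqxx Hy /=.
move=> /eqP E1 /eqP E2 Hoff.
have Hzv : Zw om1 v y = Zw om2 v y.
  apply: Zw_ext => s; apply: Hoff; rewrite inE /= negb_and; by rewrite eq_sym Huv.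
have Hzu : Zw om1 u x = Zw om2 u x.
  by apply: (catlI (w := w u)); rewrite E1 E2 Hzv.
apply/ffunP => k; case: (boolP (k \in K)) => Hk; last by apply: Hoff.
move: Hk; case: k => u' s; rewrite inE /= => /andP [/eqP Hu' /mapP [i Hi Hs]].
subst u'.
have Hi' : 0 < i <= size x by move: Hi; rewrite mem_iota Hx; lia.
have := congr1 (fun z => nth 0 z i.-1) Hzu; rewrite /= !nth_Zw //.
by rewrite -Hs !Vlet_val => /eqP; rewrite eqSS => /eqP /val_inj.
Qed.

Definition Aset b (S : finType) (T : S -> seq (seq nat)) (w : S -> seq nat) c
  : {set Omega b T} := [set om | [exists p, exists q, Ebad w c om p q]].
Arguments Aset b {S T} w c.

Lemma card_shallow (S : finType) (T : S -> seq (seq nat)) c :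
  #|[set p : vtx T | size (ssval (tagged p)) <= c]| <= Mc T c.
Proof.
set P := [set p : vtx T | _].
pose g (p : vtx T) := (tag p, ssval (tagged p)).
have ginj : injective g.
  move=> [u s] [v s']; rewrite /g /= => -[Huv]; subst v => Hs.
  by rewrite (val_inj Hs).
pose L := flatten [seq [seq (u, x) | x <- T u & size x <= c] | u <- enum S].
have -> : Mc T c = size L.
  rewrite /L /Mc size_flatten /shape -map_comp sumnE big_map.
  rewrite big_enum /=; apply: eq_bigr => u _.
  by rewrite size_map size_filter.
rewrite cardE -(size_map g); apply: uniq_leq_size.
  by rewrite (map_inj_uniq ginj) enum_uniq.
move=> z /mapP [p]; rewrite mem_enum inE => Hp ->.
apply/flattenP; exists [seq (tag p, x) | x <- T (tag p) & size x <= c].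
  by apply/mapP; exists (tag p) => //; rewrite mem_enum.
by apply: map_f; rewrite mem_filter Hp ssvalP.
Qed.

Lemma probA b (S : finType) (T : S -> seq (seq nat)) (w : S -> seq nat) c :
  (forall u, is_rooted_tree (T u)) -> 0 < b ->
  (prob (Aset b (T:=T) w c) <= (b%:R ^- c) * (Mc T c)%:R ^+ 2)%R.
Proof.
move=> Htree Hb.
set N := #|Omega b T|.
set P := [set p : vtx T | size (ssval (tagged p)) <= c].
have H1 : #|Aset b (T:=T) w c| <=
   \sum_(p : vtx T) \sum_(q : vtx T) #|[set om : Omega b T | Ebad w c om p q]|.
  rewrite -sum1_card big_mkcond /=.
  have -> : \sum_(p : vtx T) \sum_(q : vtx T) #|[set om : Omega b T | Ebad w c om p q]|
     = \sum_(p : vtx T) \sum_(q : vtx T) \sum_(om : Omega b T) (if Ebad w c om p q then 1 else 0).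
    by apply: eq_bigr => p _; apply: eq_bigr => q _; rewrite -sum1dep_card big_mkcond.
  apply: leq_trans (_ : \sum_i \sum_p \sum_q (if Ebad w c i p q then 1 else 0) <= _).
    apply: leq_sum => om _; case: ifP => // /[!inE] /existsP [p /existsP [q Hpq]].
    by rewrite (bigD1 p) //= (bigD1 q) //= Hpq -addnA leq_addr.
  by apply: eq_leq; rewrite exchange_big; apply: eq_bigr => p _; rewrite exchange_big.
have H2 : #|Aset b (T:=T) w c| * b ^ c <= Mc T c * (Mc T c * N).
  apply: leq_trans (leq_mul H1 (leqnn _)) _.
  rewrite big_distrl /=.
  apply: leq_trans (_ : \sum_(p : vtx T) (if p \in P then
      \sum_(q : vtx T) (if q \in P then N else 0) else 0) <= _).
    apply: leq_sum => p _; rewrite big_distrl /=.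
    case: ifP => Hp.
      apply: leq_sum => q _; apply: leq_trans (card_Ebad w c p q Htree Hb) _.
      rewrite /condpq; case: ifP => Hq.
        by case: [&& _, _ & _]; rewrite ?mul1n ?mul0n.
      by move: Hq; rewrite inE => ->; rewrite !andbF.
    rewrite big1 // => q _; apply/eqP; rewrite -leqn0.
    apply: leq_trans (card_Ebad w c p q Htree Hb) _.
    rewrite /condpq; case: (tag p != tag q) => //=.
    by case: eqP => //= Hs; move: Hp; rewrite inE Hs leqnn.
  rewrite -big_mkcond /=.
  under eq_bigr => p _ do rewrite -big_mkcond /= sum_nat_const.
  rewrite sum_nat_const; apply: leq_mul; first exact: card_shallow.
  by apply: leq_mul; first exact: card_shallow.
have HN : (0 < N%:R :> rat)%R.
  by rewrite ltr0n /N /Omega card_ffun card_ord expn_gt0 Hb.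
have Hbc : (0 < (b%:R ^+ c) :> rat)%R by rewrite exprn_gt0 // ltr0n.
rewrite /prob -/N ler_pdivrMr // -mulrA mulrC ler_pdivlMr //.
by rewrite -!natrX -!natrM ler_nat; apply: leq_trans H2 _; rewrite mulnA mulnn.
Qed.

Lemma size_flatten_enum (S : finType) (X : Type) (f : S -> seq X) :
  size (flatten [seq f u | u <- enum S]) = \sum_(u : S) size (f u).
Proof. by rewrite size_flatten /shape -map_comp sumnE big_map big_enum. Qed.

Lemma uniq_flatten_map (X Y : eqType) (f : X -> seq Y) s :
  uniq s -> (forall u, u \in s -> uniq (f u)) ->
  (forall u v a, u \in s -> v \in s -> a \in f u -> a \in f v -> u = v) ->
  uniq (flatten (map f s)).
Proof.
elim: s => //= a s IH /andP [Ha Hs] Hu Hd.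
rewrite cat_uniq Hu ?mem_head //=; apply/andP; split.
  apply/hasPn => z /flattenP [l /mapP [v Hv ->]] Hz; apply/negP => Hza.
  have Hv' : v \in a :: s by rewrite inE Hv orbT.
  have Hav := Hd a v z (mem_head _ _) Hv' Hza Hz.
  by move: Ha; rewrite Hav Hv.
apply: IH => //.
  by move=> u Hu'; apply: Hu; rewrite inE Hu' orbT.
by move=> u v z Hu' Hv'; apply: Hd; rewrite inE ?Hu' ?Hv' orbT.
Qed.

Lemma collision_le b (S : finType) (T : S -> seq (seq nat)) (w : S -> seq nat) c
  (om : Omega b T) u v x y :
  (forall u, is_rooted_tree (T u)) ->
  om \notin Aset b w c -> u != v -> x \in T u -> y \in T v ->
  c < size x -> c < size y -> size (w u) <= size (w v) ->
  w u ++ Zw om u x = w v ++ Zw om v y -> False.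
Proof.
move=> Htree Hom Huv Hx Hy Hcx Hcy Hwuv H.
set n := size (w u) + c - size (w v).
have hx' : take c x \in T u by case: (Htree u) => _ _ /(_ x Hx c).
have hy' : take n y \in T v by case: (Htree v) => _ _ /(_ y Hy n).
move/negP: Hom; apply; rewrite inE; apply/existsP.
exists (Tagged (fun u => seq_sub (T u)) (@SeqSub _ (T u) _ hx')); apply/existsP.
exists (Tagged (fun u => seq_sub (T u)) (@SeqSub _ (T v) _ hy')).
have Hs1 : size (take c x) == c by rewrite size_takel // ltnW.
have Hs2 : size (take n y) <= c.
  rewrite size_take_min; apply: leq_trans (geq_minl _ _) _.
  by rewrite /n leq_subLR leq_add2r.
rewrite /Ebad /condpq /= Huv Hs1 Hs2 /=.
apply/eqP; rewrite -!take_Zw.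
have E1 : w u ++ take c (Zw om u x) = take (size (w u) + c) (w u ++ Zw om u x).
  by rewrite (take_cat (size (w u) + c) (w u)) ltnNge leq_addr addKn.
rewrite E1 H (take_cat_take _ (w v)) /n; reflexivity.
Qed.

Lemma no_collision b (S : finType) (T : S -> seq (seq nat)) (w : S -> seq nat) c
  (om : Omega b T) u v x y :
  (forall u, is_rooted_tree (T u)) ->
  om \notin Aset b w c -> u != v -> x \in T u -> y \in T v ->
  c < size x -> c < size y ->
  w u ++ Zw om u x = w v ++ Zw om v y -> False.
Proof.
move=> Htree Hom Huv Hx Hy Hcx Hcy H.
case: (leqP (size (w u)) (size (w v))) => Hle.
  exact: (collision_le Htree Hom Huv Hx Hy Hcx Hcy Hle H).
have Hvu : v != u by rewrite eq_sym.
exact: (collision_le Htree Hom Hvu Hy Hx Hcy Hcx (ltnW Hle) (esym H)).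
Qed.

Unset Implicit Arguments.

Theorem lemma3p9 (b : nat) (S : finType) (T : S -> seq (seq nat))
  (w : S -> seq nat) (c : nat) :
  (2 <= b)%N ->
  (forall u, is_rooted_tree (T u)) ->
  (forall u, all (fun a => (0 < a <= b)%N) (w u)) ->
  (0 < c)%N ->
  exists A : {set Omega b T},
    (prob A <= (b%:R ^- c) * (Mc T c)%:R ^+ 2)%R /\
    forall om : Omega b T, om \notin A ->
      (0 <= (\sum_(u : S) size (Rset om u))%:Z - (size (Union w om))%:Z
         <= (Mc T c)%:Z)%R.
Proof.
move=> Hb2 Htree _ _.
have Hb : 0 < b by apply: leq_trans Hb2.
exists (Aset b w c); split; first exact: probA.
move=> om Hom.
have Hup : size (Union w om) <= \sum_(u : S) size (Rset om u).
  apply: leq_trans (size_undup _) _; rewrite size_flatten_enum.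
  by apply: eq_leq; apply: eq_bigr => u _; rewrite size_map.
pose Ld := flatten [seq [seq w u ++ z | z <- Rset om u & c < size z] | u <- enum S].
have HLd : size Ld = \sum_(u : S) count (fun z => c < size z) (Rset om u).
  by rewrite size_flatten_enum; apply: eq_bigr => u _; rewrite size_map size_filter.
have Hsub : {subset Ld <= Union w om}.
  move=> a /flattenP [l /mapP [u Hu ->]] /mapP [z]; rewrite mem_filter => /andP [_ Hz] ->.
  rewrite mem_undup; apply/flattenP; exists [seq w u ++ z | z <- Rset om u].
    by apply: map_f.
  exact: map_f.
have Huniq : uniq Ld.
  apply: uniq_flatten_map; first exact: enum_uniq.
    move=> u _; rewrite map_inj_uniq; first by apply: filter_uniq; apply: undup_uniq.
    exact: catlI.
  move=> u v a _ _ /mapP [z1]; rewrite mem_filter => /andP [Hc1 Hz1] ->.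
  move=> /mapP [z2]; rewrite mem_filter => /andP [Hc2 Hz2] Heq.
  case: (eqVneq u v) => // Huv; exfalso.
  move: Hz1 Hz2 Hc1 Hc2 Heq; rewrite !mem_undup => /mapP [x Hx ->] /mapP [y Hy ->].
  rewrite !size_Zw => Hcx Hcy Heq.
  exact: (no_collision Htree Hom Huv Hx Hy Hcx Hcy Heq).
have Hdeep : \sum_(u : S) count (fun z => c < size z) (Rset om u) <= size (Union w om).
  by rewrite -HLd; apply: uniq_leq_size.
have Hsh : \sum_(u : S) count (fun z => size z <= c) (Rset om u) <= Mc T c.
  apply: leq_sum => u _.
  rewrite /Rset -size_filter filter_undup; apply: leq_trans (size_undup _) _.
  rewrite size_filter count_map; apply: eq_leq; apply: eq_count => x.
  by rewrite /= size_Zw.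
have Hsplit : \sum_(u : S) size (Rset om u) =
   \sum_(u : S) count (fun z => size z <= c) (Rset om u) +
   \sum_(u : S) count (fun z => c < size z) (Rset om u).
  rewrite -big_split; apply: eq_bigr => u _ /=.
  rewrite -(count_predC (fun z => size z <= c)); congr addn.
  by apply: eq_count => z; rewrite /= ltnNge.
apply/andP; split; lia.
Qed.
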